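(* Let $W=(w_{ij})\in (\mathbb{R}_{>0})^{n\times m}$, $T=T(W)=(t_{ij})$ and $s\in\mathbb{C}$. Then $$\sum_{i=1}^p \frac{s}{w_{i,p-i+1}} + \sum {}^{'} \frac{1}{w_{ij}} = \mathcal{E}_s(T),$$ where $p=n\wedge m$ and $\sum^{'}$ denotes the sum over $1\le i\le n,\ 1\le j\le m$ such that $j\ne p-i+1$.
   Context: The geometric RSK map $T$ on $(\mathbb{R}_{>0})^{n\times m}$ is defined through local moves. For $2\le i\le n$, $2\le j\le m$, the map $l_{ij}$ replaces the submatrix $\begin{pmatrix} x_{i-1,j-1}& x_{i-1,j}\\ x_{i,j-1}& x_{ij}\end{pmatrix}=\begin{pmatrix} a& b\\ c& d\end{pmatrix}$ by $\begin{pmatrix} bc/(ab+ac) & b\\ c& d(b+c) \end{pmatrix}$, leaving the other entries unchanged. For $2\le i\le n$, $l_{i1}$ replaces $x_{i1}$ by $x_{i-1,1}x_{i1}$; for $2\le j\le m$, $l_{1j}$ replaces $x_{1j}$ by $x_{1,j-1}x_{1j}$; $l_{11}$ is the identity. Set $\pi^j_i=l_{ij}\circ\cdots\circ l_{i1}$, $R_i=\pi_1^{m-i+1}\circ\cdots\circ\pi^m_i$ if $i\le m$ and $R_i=\pi^1_{i-m+1}\circ\cdots\circ\pi^m_i$ if $i\ge m$, and $T=R_n\circ\cdots\circ R_1$. For $X=(x_{ij})\in(\mathbb{R}_{>0})^{n\times m}$ and $s\in\mathbb{C}$, $\mathcal{E}_s(X)=\frac{s}{x_{11}}+\sum_{i,j}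 \frac{x_{i-1,j}+x_{i,j-1}}{x_{ij}}$, the sum over $1\le i\le n$, $1\le j\le m$, with the convention $x_{ij}=0$ if $i=0$ or $j=0$. *)

(* Defs.v *)
(* Matrices in (R_{>0})^{n x m} are encoded as
   functions nat -> nat -> R, read with 1-based indices (i,j), 1<=i<=n,
   1<=j<=m; entries outside that range are irrelevant. *)
From HB Require Import structures.
From mathcomp Require Import all_boot all_order all_algebra.
From mathcomp Require Import reals complex.
Set Implicit Arguments. Unset Strict Implicit. Unset Printing Implicit Defensive.
Import Order.TTheory GRing.Theory Num.Theory.
Local Open Scope ring_scope.

Section GRSK.
Variable R : realType.

Definition mx := nat -> nat -> R.

Definition upd (X : mx) (i j : nat) (v : R) : mx :=
  fun a b => if (a == i) && (b == j) then v else X a b.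

Definition lmove (i j : nat) (X : mx) : mx :=
  if (2 <= i)%N && (2 <= j)%N then
    let a := X i.-1 j.-1 in let b := X i.-1 j in
    let c := X i j.-1 in let d := X i j in
    upd (upd X i.-1 j.-1 (b * c / (a * b + a * c))) i j (d * (b + c))
  else if (2 <= i)%N && (j == 1)%N then upd X i 1 (X i.-1 1%N * X i 1%N)
  else if (i == 1)%N && (2 <= j)%N then upd X 1 j (X 1%N j.-1 * X 1%N j)
  else X.

Definition pimove (i j : nat) (X : mx) : mx :=
  foldl (fun Y k => lmove i k Y) X (iota 1 j).

(* R_i = pi^{m-k}_{i-k} composed for k = min(i,m)-1, ..., 1, 0
   (k = 0, i.e. pi^m_i, applied first). For i <= m this is
   pi^{m-i+1}_1 o ... o pi^m_i, and for i >= m it is pi^1_{i-m+1} o ... o pi^m_i. *)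
Definition Rmove (m i : nat) (X : mx) : mx :=
  foldl (fun Y k => pimove (i - k) (m - k) Y) X (iota 0 (minn i m)).

Definition gRSK (n m : nat) (X : mx) : mx :=
  foldl (fun Y i => Rmove m i Y) X (iota 1 n).

Definition xz (X : mx) (i j : nat) : R :=
  if (i == 0)%N || (j == 0)%N then 0 else X i j.

Local Open Scope complex_scope.

Definition energy (n m : nat) (s : R[i]) (X : mx) : R[i] :=
  (s / (X 1%N 1%N)%:C +
   \sum_(1 <= i < n.+1) \sum_(1 <= j < m.+1)
      ((xz X i.-1 j + xz X i j.-1) / X i j)%:C)%R.

End GRSK.

(* Main.v *)
Require Import Defs.
From HB Require Import structures.
From mathcomp Require Import all_boot all_order all_algebra.
From mathcomp Require Import reals complex.
From Stdlib Require Import FunctionalExtensionality.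
From mathcomp Require Import zify ring lra.
Import Order.TTheory GRing.Theory Num.Theory.
Local Open Scope ring_scope.
Local Open Scope complex_scope.

Section Proof.

Variable R : realType.
Implicit Types X Y : mx R.

Definition vv X (i l : nat) : R :=
  if i == 0%N then 0 else if l == 0%N then (if i == 1%N then 1 else 0) else X i l.

Fixpoint zrow X (i l : nat) : R :=
  match l with
  | 0 => if i == 1%N then 1 else 0
  | l'.+1 => X i l * (vv X i.-1 l + zrow X i l')
  end.

Definition Pval X (i b : nat) : R :=
  X i.-1 b.+1 * zrow X i b / (X i.-1 b * X i.-1 b.+1 + X i.-1 b * zrow X i b).

Definition pim X (i j : nat) : mx R := fun a b =>
  if (a == i) && (0 < b <= j)%N then zrow X i b
  else if (1 < i)%N && (a == i.-1) && (0 < b < j)%N then Pval X i b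
  else X a b.

Lemma mxext (X Y : mx R) : (forall a b, X a b = Y a b) -> X = Y.
Proof.
move=> H. apply: (@functional_extensionality nat (nat -> R)) => a.
by apply: functional_extensionality => b.
Qed.

Lemma pimoveS i j X : pimove i j.+1 X = lmove i j.+1 (pimove i j X).
Proof.
have E : iota 1 j.+1 = iota 1 j ++ [:: j.+1] by rewrite -[in LHS](addn1 j) iotaD add1n.
by rewrite /pimove E foldl_cat.
Qed.

Lemma pim_row i j X b : (0 < i)%N ->
  pim X i j i b = if (0 < b <= j)%N then zrow X i b else X i b.
Proof.
move=> i0; rewrite /pim eqxx /=; case: ifP => // _.
have -> : (i == i.-1) = false by lia.
by rewrite andbF.
Qed.

Lemma pim_up i j X b : (1 < i)%N ->
  pim X i j i.-1 b = if (0 < b < j)%N then Pval X i b else X i.-1 b.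
Proof.
move=> i1; rewrite /pim.
have -> : (i.-1 == i) = false by lia.
by rewrite /= i1 eqxx.
Qed.

Lemma pim_other i j X a b : a != i -> ((1 < i)%N ==> (a != i.-1)) ->
  pim X i j a b = X a b.
Proof.
move=> ai H; rewrite /pim (negbTE ai) /=.
by case: (1 < i)%N H => //= /negbTE ->.
Qed.

Lemma pimove_eq i j X : (0 < i)%N -> pimove i j X = pim X i j.
Proof.
move=> i0; elim: j => [|j IH].
  apply: mxext => a b.
  rewrite /pim /=. case: ifP => [/andP[_ H]|_]; first by exfalso; lia.
  case: ifP => [/andP[_ H]|_] //; by exfalso; lia.
rewrite pimoveS IH /lmove.
apply: mxext => a b.
case: i i0 {IH} => [//|[|i]] _ /=.
-
  case: j => [|j] /=.
  + case: (a =P 1%N) => [->|ane].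
      rewrite !pim_row //.
      case: b => [|[|b]] //=; by rewrite /vv /= add0r mulr1.
    by move/eqP: ane => ane; rewrite !pim_other.
  + rewrite /upd.
    case: (a =P 1%N) => [->|ane]; last by have ane' : a != 1%N := introN eqP ane; rewrite /= !pim_other.
    rewrite /= !pim_row //.
    case: (b =P j.+2) => [->|bne] /=.
      by rewrite !ltnSn ltnn /vv /=; ring.
    case: ifP => H1; case: ifP => H2 //; exfalso; lia.
- have ge : (1 < i.+2)%N by [].
  case: j => [|j] /=.
  + rewrite /upd.
    case: (a =P i.+2) => [->|ane] /=.
      rewrite !pim_row // (pim_up _ _ _ _ ge) /=.
      case: b => [|[|b]] //=.
      by rewrite /vv /=; ring.
    case: (a =P i.+1) => [->|ane2].
      rewrite !(pim_up _ _ _ _ ge).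
      by case: ifP => H1; case: ifP => H2 //; exfalso; lia.
    have ane' : a != i.+2 := introN eqP ane.
    have ane2' : a != i.+1 := introN eqP ane2.
    by rewrite !pim_other.
  + rewrite /upd.
    rewrite !(pim_row _ _ _ _ (ltn0Sn _)) !(pim_up _ _ _ _ ge) /=.
    rewrite ?ltnn ?leqnn ?ltnSn /=.
    have -> : (j.+2 < j.+1)%N = false by lia.
    case: (a =P i.+2) => [->|ane] /=.
      have -> : (i.+2 == i.+1) = false by lia.
      rewrite !(pim_row _ _ _ _ (ltn0Sn _)) /=.
      case: (b =P j.+2) => [->|bne] /=.
        by rewrite leqnn /= /vv /=.
      by case: ifP => H1; case: ifP => H2 //; exfalso; lia.
    case: (a =P i.+1) => [->|ane2] /=.
      rewrite !(pim_up _ _ _ _ ge) /=.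
      case: (b =P j.+1) => [->|bne] /=.
        by rewrite ltnSn /Pval /= /vv /=.
      by case: ifP => H1; case: ifP => H2 //; exfalso; lia.
    have ane' : a != i.+2 := introN eqP ane.
    have ane2' : a != i.+1 := introN eqP ane2.
    by rewrite !pim_other.
Qed.


Lemma foldl_shift (f g : mx R -> nat -> mx R) (s : seq nat) Y :
  (forall Z t, f Z t.+1 = g Z t) -> foldl f Y (map S s) = foldl g Y s.
Proof. move=> H; elim: s Y => [//|t s IH] Y /=; by rewrite H IH. Qed.

Lemma Rmove0 m X : Rmove m 0 X = X.
Proof. by rewrite /Rmove min0n. Qed.
Lemma Rmove0m k X : Rmove 0 k X = X.
Proof. by rewrite /Rmove minn0. Qed.

Lemma RmoveS m k X : Rmove m.+1 k.+1 X = Rmove m k (pimove k.+1 m.+1 X).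
Proof.
rewrite /Rmove minnSS /= subn0 subn0.
have -> : iota 1 (minn k m) = map S (iota 0 (minn k m)).
  elim: (minn k m) 0%N => [//|n IH] a /=. by rewrite IH.
by apply: foldl_shift => Z t; rewrite !subSS.
Qed.


Lemma alg_S (A B C z P y : nat -> R) (m' : nat) :
 (0 < m')%N ->
 (forall l, (0 < l <= m'.+1)%N -> 0 < B l) ->
 (forall l, (0 < l <= m'.+1)%N -> 0 < C l) ->
 (forall l, (0 < l <= m'.+1)%N -> 0 < z l) ->
 z 0%N = 0 ->
 (forall l, (0 < l <= m'.+1)%N -> z l = C l * (B l + z l.-1)) ->
 (forall l, (0 < l <= m')%N -> P l = B l.+1 * z l / (B l * B l.+1 + B l * z l)) ->
 (forall l, (0 < l <= m')%N -> y l = P l * (A l + y l.-1)) ->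
 let B' := fun l => if l == 0%N then y 0%N else B l in
 (A m'.+1 + y m') / B m'.+1 + \sum_(1 <= l < m'.+1) (y l + z l.-1) / z l
   + (B m'.+1 + z m') / z m'.+1
 = \sum_(1 <= l < m'.+2) (A l + B' l.-1) / B l + \sum_(1 <= l < m'.+2) 1 / C l
   - \sum_(1 <= l < m'.+1) 1 / P l.
Proof.
move=> m0 Bp Cp zp z0 zE PE yE B'.
pose T l := (y l.-1 - B' l.-1) / B l.
have D : forall l, (0 < l <= m')%N ->
  (y l + z l.-1) / z l - (A l + B' l.-1) / B l - 1 / C l + 1 / P l
  = (- T l.+1) - (- T l).
  move=> l /andP[l0 lm].
  have Bl : 0 < B l by apply: Bp; lia.
  have Bl1 : 0 < B l.+1 by apply: Bp; lia.
  have Cl : 0 < C l by apply: Cp; lia.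
  have zl : 0 < z l by apply: zp; lia.
  have zl1 : 0 <= z l.-1.
    case: l l0 lm {Bl Bl1 Cl zl} => [//|[|l]] _ lm; first by rewrite z0.
    by apply/ltW/zp; lia.
  rewrite /T /= /B' (_ : (l == 0%N) = false); last by lia.
  have lr : (0 < l <= m')%N by lia.
  have lr' : (0 < l <= m'.+1)%N by lia.
  rewrite (yE l lr) (PE l lr) (zE l lr').
  have h1 : B l + z l.-1 != 0 by rewrite gt_eqF // ltr_wpDr.
  have h2 : C l != 0 by rewrite gt_eqF.
  have h3 : B l != 0 by rewrite gt_eqF.
  have h4 : B l.+1 != 0 by rewrite gt_eqF.
  have h5 : B l.+1 + C l * (B l + z l.-1) != 0.
    by rewrite gt_eqF // addr_gt0 // mulr_gt0 // ltr_wpDr.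
  field.
  by rewrite h1 h2 h3 h4 /= -mulrDr mulf_neq0.
have HS : \sum_(1 <= l < m'.+1) ((y l + z l.-1) / z l - (A l + B' l.-1) / B l
     - 1 / C l + 1 / P l) = - T m'.+1 - (- T 1%N).
  apply: (telescope_sumr_eq (fun l => - T l)) => // l /andP[l1 l2]; apply: D; lia.
rewrite !big_split /= !sumrN in HS.
have T1 : T 1%N = 0 by rewrite /T /B' /= subrr mul0r.
have Tm : T m'.+1 = (y m' - B m') / B m'.+1.
  by rewrite /T /B' /= (_ : (m' == 0%N) = false) //; lia.
have Lc : (B m'.+1 + z m') / z m'.+1 = 1 / C m'.+1.
  have Bm := Bp m'.+1 ltac:(lia). have Cm : 0 < C m'.+1 by apply: Cp; lia.
  have zm : 0 <= z m'.
    by apply/ltW/zp; lia.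
  rewrite (zE m'.+1) /=; last by lia.
  field.
  by rewrite !gt_eqF // ltr_wpDr.
rewrite !(big_nat_recr m'.+1 1) //=.
rewrite Lc.
have E1 : B' m' = B m' by rewrite /B' (_ : (m' == 0%N) = false) //; lia.
rewrite E1.
move: HS; rewrite Tm T1.
set s1 := \sum_(1 <= l < m'.+1) _.
set s2 := \sum_(1 <= l < m'.+1) _.
set s3 := \sum_(1 <= l < m'.+1) _.
set s4 := \sum_(1 <= l < m'.+1) _.
move=> HS.
rewrite !mulrDl in HS *.
lra.
Qed.
Definition ZF X (i l : nat) : R := (vv X i.-1 l + vv X i l.-1) / X i l.
Definition U X (k m : nat) : R := \sum_(1 <= i < k.+1) \sum_(1 <= l < m.+1) ZF X i l.
Definition pos X (n m : nat) := forall i l, (0 < i <= n)%N -> (0 < l <= m)%N -> 0 < X i l.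

Lemma dsum_split (F : nat -> nat -> R) k m :
  \sum_(1 <= i < k.+2) \sum_(1 <= l < m.+2) F i l =
  \sum_(1 <= i < k.+1) \sum_(1 <= l < m.+1) F i l + \sum_(1 <= i < k.+1) F i m.+1
  + \sum_(1 <= l < m.+2) F k.+1 l.
Proof.
rewrite (big_nat_recr k.+1 1) //=.
rewrite (eq_bigr (fun i => \sum_(1 <= l < m.+1) F i l + F i m.+1)); last first.
  by move=> i _; rewrite (big_nat_recr m.+1 1).
by rewrite big_split.
Qed.

Lemma pim_fr X i j a b : ~~ ((a == i) && (0 < b <= j)%N) ->
  ~~ ((1 < i)%N && (a == i.-1) && (0 < b < j)%N) -> pim X i j a b = X a b.
Proof. by rewrite /pim => /negbTE -> /negbTE ->. Qed.

Lemma Rmove_fr m k X a b : ((k < a) || (m < b))%N -> Rmove m k X a b = X a b.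
Proof.
elim: k m X => [|k IH] m X H; first by rewrite Rmove0.
case: m H => [|m] H; first by rewrite Rmove0m.
rewrite RmoveS IH; last by lia.
rewrite pimove_eq // pim_fr //; lia.
Qed.

Lemma Rmove_lastcol m k X a : (a < k)%N -> Rmove m k X a m = X a m.
Proof.
case: k => [//|k]; case: m => [|m] ak; first by rewrite Rmove0m.
rewrite RmoveS Rmove_fr; last by lia.
rewrite pimove_eq // pim_fr //; lia.
Qed.

Lemma Rmove11 m k X : (m < k)%N -> Rmove m k X 1 1 = X 1 1.
Proof.
elim: k m X => [//|k IH] m X H.
case: m H => [|m] H; first by rewrite Rmove0m.
rewrite RmoveS IH; last by lia.
rewrite pimove_eq // pim_fr //; lia.
Qed.

Lemma vv0 X l : vv X 0 l = 0. Proof. by []. Qed.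

Lemma vv_eq X Y a b : (a != 0%N -> b != 0%N -> X a b = Y a b) -> vv X a b = vv Y a b.
Proof.
rewrite /vv; case: (a =P 0%N) => // /eqP a0; case: (b =P 0%N) => // /eqP b0.
by move=> H; rewrite H.
Qed.

Lemma vv_pim_row X i j l : (0 < i)%N -> (l <= j)%N -> vv (pim X i j) i l = zrow X i l.
Proof.
move=> i0 lj; rewrite /vv (_ : (i == 0%N) = false); last by lia.
case: l lj => [|l] lj //=.
by rewrite pim_row // lj.
Qed.

Lemma Rmove_botrow m k X l : (0 < k)%N -> (0 < l <= m)%N -> Rmove m k X k l = zrow X k l.
Proof.
case: k => [//|k]; case: m => [|m] _ lm; first by lia.
rewrite RmoveS Rmove_fr; last by lia.
by rewrite pimove_eq // pim_row // lm.
Qed.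

Lemma vv_Rmove_botrow m k X l : (0 < k)%N -> (l <= m)%N -> vv (Rmove m k X) k l = zrow X k l.
Proof.
move=> k0 lm; rewrite /vv (_ : (k == 0%N) = false); last by lia.
case: l lm => [|l] lm //=.
by rewrite Rmove_botrow //; lia.
Qed.

Lemma pos_mono X n m n' m' : pos X n m -> (n' <= n)%N -> (m' <= m)%N -> pos X n' m'.
Proof. move=> H h1 h2 i l hi hl; apply: H; lia. Qed.

Lemma zrow_ge0 X i n m l : (0 < i <= n)%N -> pos X n m -> (l <= m)%N -> 0 <= zrow X i l.
Proof.
move=> hi Xp; elim: l => [|l IH] lm /=.
  by case: (i == 1%N).
apply/mulr_ge0; first by apply/ltW/Xp; lia.
apply: addr_ge0; last by apply: IH; lia.
rewrite /vv; case: (i.-1 =P 0%N) => [//|ne] /=; apply/ltW/Xp; lia.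
Qed.

Lemma zrow_gt0 X i n m l : (0 < i <= n)%N -> pos X n m -> (0 < l <= m)%N -> 0 < zrow X i l.
Proof.
move=> hi Xp; elim: l => [//|l IH] lm /=.
apply/mulr_gt0; first by apply/Xp; lia.
case: l IH lm => [|l] IH lm.
  rewrite /vv /=. case: (i =P 1%N) => [->|ni] /=; first by rewrite add0r ltr01.
  rewrite (_ : (i.-1 == 0%N) = false) ?addr0; last by lia.
  apply: Xp; lia.
apply: ltr_wpDl; last by apply: IH; lia.
rewrite /vv; case: (i.-1 =P 0%N) => [//|ne] /=; apply/ltW/Xp; lia.
Qed.

Lemma pos_pim X i j n m : pos X n m -> (0 < i <= n)%N -> (j <= m)%N -> pos (pim X i j) n m.
Proof.
move=> Xp hi hj a b ha hb; rewrite /pim.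
case: ifP => [/andP[/eqP ea hb']|_]; first by apply: (@zrow_gt0 X i n m b); [lia|exact Xp|lia].
case: ifP => [/andP[/andP[i1 /eqP ea] hb']|_]; last by apply: Xp.
subst a.
have z0 : 0 < zrow X i b by apply: (@zrow_gt0 X i n m b); [lia|exact Xp|lia].
have x1 : 0 < X i.-1 b by apply: Xp; lia.
have x2 : 0 < X i.-1 b.+1 by apply: Xp; lia.
rewrite /Pval -mulrDr; apply: divr_gt0; first by apply: mulr_gt0.
by apply: mulr_gt0 => //; apply: addr_gt0.
Qed.

Lemma pos_Rmove X n mm m k : pos X n mm -> (k <= n)%N -> (m <= mm)%N -> pos (Rmove m k X) n mm.
Proof.
elim: k m X => [|k IH] m X Xp hk hm; first by rewrite Rmove0.
case: m hm => [|m] hm; first by rewrite Rmove0m.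
rewrite RmoveS; apply: IH; [|lia|lia].
rewrite pimove_eq //; apply: pos_pim => //; lia.
Qed.

Lemma U_split Y k m : U Y k.+1 m.+1 =
  U Y k m + \sum_(1 <= i < k.+1) ZF Y i m.+1 + \sum_(1 <= l < m.+2) ZF Y k.+1 l.
Proof. exact: dsum_split. Qed.

Lemma U_m0 Y k : U Y k 0 = 0.
Proof. by rewrite /U big1 // => i _; rewrite big_geq. Qed.

Lemma S_Rmove k m X : (0 < k)%N -> pos X k m ->
  U (Rmove m k X) k m = U X k.-1 m + \sum_(1 <= l < m.+1) 1 / X k l.
Proof.
elim: k m X => [//|k IH] m X _ Xp.
case: m Xp => [|m'] Xp; first by rewrite Rmove0m !U_m0 big_geq // addr0.
rewrite RmoveS pimove_eq //.
set X' := pim X k.+1 m'.+1.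
case: k IH Xp @X' => [|k] IH Xp X'.
  rewrite Rmove0 /U big_nat1 [in RHS]big_geq // add0r.
  apply: eq_big_nat => l /andP[l1 l2].
  rewrite /ZF /= vv0 add0r vv_pim_row //; last by lia.
  rewrite /X' pim_row // (_ : (0 < l <= m'.+1)%N = true); last by lia.
  case: l l1 l2 => [//|l] _ l2.
  rewrite /= vv0 add0r.
  have zp : 0 < zrow X 1 l.
    case: l l2 => [|l] l2; first by rewrite /= ltr01.
    by apply: (@zrow_gt0 X 1 1 m'.+1 l.+1) => //; lia.
  have xp : 0 < X 1%N l.+1 by apply: Xp; lia.
  by field; rewrite !gt_eqF.
set Z := Rmove m' k.+1 X'.
have X'p : pos X' k.+2 m'.+1 by apply: pos_pim => //; lia.
have IHs := IH m' X' (ltn0Sn _) (@pos_mono X' k.+2 m'.+1 k.+1 m' X'p (leqnSn _) (leqnSn _)).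
rewrite -/Z in IHs.
rewrite U_split IHs /= U_split.
have X'up : forall a b, (a <= k)%N -> X' a b = X a b.
  by move=> a b ak; rewrite /X' pim_fr //; lia.
have E1 : U X' k m' = U X k m'.
  apply: eq_big_nat => i /andP[i1 i2]; apply: eq_big_nat => l /andP[l1 l2].
  rewrite /ZF (X'up i l); last by lia.
  rewrite (vv_eq X' X i.-1 l); last by move=> _ _; apply: X'up; lia.
  by rewrite (vv_eq X' X i l.-1) // => _ _; apply: X'up; lia.
have E2 : \sum_(1 <= i < k.+2) ZF Z i m'.+1 =
    \sum_(1 <= i < k.+1) ZF X i m'.+1 + ZF Z k.+1 m'.+1.
  rewrite (big_nat_recr k.+1 1) //=; congr (_ + _).
  apply: eq_big_nat => i /andP[i1 i2].
  rewrite /ZF /Z Rmove_fr; last by lia.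
  rewrite (vv_eq Z X i.-1); last first.
    by move=> _ _; rewrite /Z Rmove_fr ?X'up //; lia.
  rewrite (vv_eq Z X i m'); last first.
    by move=> _ _; rewrite /Z Rmove_lastcol ?X'up //; lia.
  by rewrite X'up //; lia.
rewrite E1 E2.
suff RES : \sum_(1 <= l < m'.+1) 1 / X' k.+1 l + ZF Z k.+1 m'.+1
   + \sum_(1 <= l < m'.+2) ZF Z k.+2 l
   = \sum_(1 <= l < m'.+2) ZF X k.+1 l + \sum_(1 <= l < m'.+2) 1 / X k.+2 l.
  by move: RES; lra.
pose A := vv X k. pose B := X k.+1. pose C := X k.+2. pose z := zrow X k.+2.
pose P := Pval X k.+2. pose y := zrow X' k.+1.
pose B' := fun l => if l == 0%N then y 0%N else B l.
have R1 : \sum_(1 <= l < m'.+1) 1 / X' k.+1 l = \sum_(1 <= l < m'.+1) 1 / P l.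
  apply: eq_big_nat => l /andP[l1 l2].
  by rewrite /X' (pim_up _ _ _ _ (isT : (1 < k.+2)%N)) /= (_ : (0 < l < m'.+1)%N = true) //; lia.
have Zk2 : forall l, Z k.+2 l = X' k.+2 l by move=> l; rewrite /Z Rmove_fr //; lia.
have R2 : ZF Z k.+1 m'.+1 = (A m'.+1 + y m') / B m'.+1.
  rewrite /ZF /= (vv_eq Z X k m'.+1); last first.
    by move=> _ _; rewrite /Z Rmove_fr ?X'up //; lia.
  rewrite vv_Rmove_botrow // /Z Rmove_fr; last by lia.
  by rewrite /X' pim_fr //; lia.
have R3 : \sum_(1 <= l < m'.+2) ZF Z k.+2 l =
   \sum_(1 <= l < m'.+1) (y l + z l.-1) / z l + (B m'.+1 + z m') / z m'.+1.
  rewrite (big_nat_recr m'.+1 1) //=; congr (_ + _).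
    apply: eq_big_nat => l /andP[l1 l2].
    rewrite /ZF /= vv_Rmove_botrow; last by lia. 2: by [].
    rewrite (vv_eq Z X' k.+2 l.-1); last by move=> _ _; apply: Zk2.
    rewrite vv_pim_row //; last by lia.
    by rewrite Zk2 /X' pim_row // (_ : (0 < l <= m'.+1)%N = true) //; lia.
  rewrite /ZF /= (vv_eq Z X' k.+2 m'); last by move=> _ _; apply: Zk2.
  rewrite (vv_pim_row _ _ _ _ (ltn0Sn _) (leqnSn _)).
  rewrite Zk2 /X' pim_row // leqnn /=.
  rewrite /vv /=. rewrite /Z Rmove_fr; last by lia.
  rewrite /X' pim_fr; try lia. by [].
have R4 : \sum_(1 <= l < m'.+2) ZF X k.+1 l = \sum_(1 <= l < m'.+2) (A l + B' l.-1) / B l.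
  apply: eq_big_nat => l /andP[l1 l2].
  rewrite /ZF /= /B'; case: l l1 l2 => [//|[|l]] _ l2 //=.
rewrite R1 R2 R3 R4.
have Bp : forall l, (0 < l <= m'.+1)%N -> 0 < B l by move=> l hl; apply: Xp; lia.
have Cp : forall l, (0 < l <= m'.+1)%N -> 0 < C l by move=> l hl; apply: Xp; lia.
have zp : forall l, (0 < l <= m'.+1)%N -> 0 < z l.
  by move=> l hl; apply: (@zrow_gt0 X k.+2 k.+2 m'.+1 l) => //; lia.
have zE : forall l, (0 < l <= m'.+1)%N -> z l = C l * (B l + z l.-1).
  by move=> [|l] // _.
destruct (posnP m') as [m0|m0].
  subst m'.
  rewrite [\sum_(1 <= l < 1) _]big_geq // [\sum_(1 <= l < 1) _]big_geq // !big_nat1 /= /B' /=.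
  rewrite (zE 1%N isT) (_ : z 0%N = 0) // !add0r addr0.
  have b1 := Bp 1%N isT. have c1 := Cp 1%N isT.
  rewrite /C in c1.
  rewrite /C /B in b1 c1 *. by field; rewrite !gt_eqF.
have yE : forall l, (0 < l <= m')%N -> y l = P l * (A l + y l.-1).
  move=> [|l] // hl.
  rewrite /y /= /X' (pim_up _ _ _ _ (isT : (1 < k.+2)%N)) /=.
  rewrite (_ : (l.+1 < m'.+1)%N = true); last by lia.
  congr (_ * (_ + _)).
  by apply: vv_eq => _ _; rewrite pim_fr //; lia.
have := alg_S A B C z P y m' m0 Bp Cp zp (erefl _) zE (fun l _ => erefl _) yE.
rewrite /= /B' /C.
lra.
Qed.

Lemma C_Rmove k m c X : (0 < k)%N -> (0 < c)%N -> (c + k <= m.+1)%N -> pos X k m ->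
  \sum_(1 <= i < k.+1) vv (Rmove m k X) i c.-1 / Rmove m k X i c
  = \sum_(1 <= i < k) X i c / X i c.+1 + 1 / X k c.
Proof.
elim: k m X => [//|k IH] m X _ c0 hc Xp.
case: m hc Xp => [|m'] hc Xp; first by lia.
rewrite RmoveS pimove_eq //.
set X' := pim X k.+1 m'.+1.
case: k IH Xp hc @X' => [|k] IH Xp hc X'.
  rewrite Rmove0 big_nat1 [in RHS]big_geq // add0r.
  rewrite vv_pim_row //; last by lia.
  rewrite /X' pim_row // (_ : (0 < c <= m'.+1)%N = true); last by lia.
  case: c c0 hc {IH} => [//|c] _ hc.
  rewrite /= vv0 add0r.
  have zp : 0 < zrow X 1 c.
    case: c hc => [|c] hc; first by rewrite /= ltr01.
    by apply: (@zrow_gt0 X 1 1 m'.+1 c.+1) => //; lia.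
  have xp : 0 < X 1%N c.+1 by apply: Xp; lia.
  by field; rewrite !gt_eqF.
set Z := Rmove m' k.+1 X'.
have X'p : pos X' k.+2 m'.+1 by apply: pos_pim => //; lia.
have IHs := IH m' X' (ltn0Sn _) c0 ltac:(lia) (@pos_mono X' k.+2 m'.+1 k.+1 m' X'p (leqnSn _) (leqnSn _)).
rewrite -/Z in IHs.
rewrite (big_nat_recr k.+2 1) // IHs /= (big_nat_recr k.+1 1) //=.
have E : \sum_(1 <= i < k.+1) X' i c / X' i c.+1 = \sum_(1 <= i < k.+1) X i c / X i c.+1.
  apply: eq_big_nat => i /andP[i1 i2].
  by rewrite /X' !pim_fr //; lia.
rewrite E -!addrA; congr (_ + _).
have Zk2 : forall l, Z k.+2 l = X' k.+2 l by move=> l; rewrite /Z Rmove_fr //; lia.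
rewrite (vv_eq Z X' k.+2 c.-1); last by move=> _ _; apply: Zk2.
rewrite vv_pim_row //; last by lia.
rewrite Zk2 /X' pim_row // (_ : (0 < c <= m'.+1)%N = true); last by lia.
rewrite (pim_up _ _ _ _ (isT : (1 < k.+2)%N)) /= (_ : (0 < c < m'.+1)%N = true); last by lia.
case: c c0 hc IH IHs E => [//|c] _ hc _ _ _.
rewrite /Pval /=.
have x1 : 0 < X k.+1 c.+1 by apply: Xp; lia.
have x2 : 0 < X k.+1 c.+2 by apply: Xp; lia.
have x3 : 0 < X k.+2 c.+1 by apply: Xp; lia.
have z0 : 0 <= zrow X k.+2 c by apply: (@zrow_ge0 X k.+2 k.+2 m'.+1 c) => //; lia.
have h1 : X k.+1 c.+1 + zrow X k.+2 c != 0 by rewrite gt_eqF // ltr_wpDr.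
have h2 : X k.+1 c.+2 + X k.+2 c.+1 * (X k.+1 c.+1 + zrow X k.+2 c) != 0.
  by rewrite gt_eqF // addr_gt0 // mulr_gt0 // ltr_wpDr.
rewrite (_ : vv X k.+1 c.+1 = X k.+1 c.+1) //. field.
by rewrite h1 -mulrDr mulf_neq0 // !gt_eqF.
Qed.

Lemma gRSKS n m X : gRSK n.+1 m X = Rmove m n.+1 (gRSK n m X).
Proof.
have E : iota 1 n.+1 = iota 1 n ++ [:: n.+1] by rewrite -[in LHS](addn1 n) iotaD add1n.
by rewrite /gRSK E foldl_cat.
Qed.

Lemma gRSK_fr k m X a b : (k < a)%N -> gRSK k m X a b = X a b.
Proof.
elim: k => [|k IH] ka; first by [].
rewrite gRSKS Rmove_fr ?IH //; lia.
Qed.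

Lemma gRSK_pos k n m W : pos W n m -> (k <= n)%N -> pos (gRSK k m W) n m.
Proof.
move=> Wp; elim: k => [|k IH] kn; first by [].
rewrite gRSKS; apply: pos_Rmove => //; apply: IH; lia.
Qed.

Lemma gRSK_U k n m W : pos W n m -> (k <= n)%N ->
  U (gRSK k m W) k m = \sum_(1 <= i < k.+1) \sum_(1 <= l < m.+1) 1 / W i l.
Proof.
move=> Wp; elim: k => [|k IH] kn; first by rewrite /U !big_geq.
rewrite gRSKS S_Rmove //; last first.
  apply: (@pos_mono _ n m) => //; apply: gRSK_pos => //; lia.
rewrite /= IH; last by lia.
rewrite (big_nat_recr k.+1 1) //=; congr (_ + _).
apply: eq_big_nat => l _; rewrite gRSK_fr //.
Qed.

Definition Gf (p k : nat) X : R :=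
  \sum_(1 <= i < k.+1) vv X i (p - k) / X i (p - k).+1
  + \sum_(k.+1 <= i < p.+1) 1 / X i (p - i).+1.

Lemma gRSK_G k n m W : pos W n m -> (k <= minn n m)%N ->
  Gf (minn n m) k (gRSK k m W) = Gf (minn n m) 0 W.
Proof.
move=> Wp.
elim: k => [|k IH] kp; first by [].
rewrite -IH; last by lia.
rewrite gRSKS.
set Y := gRSK k m W.
have Yp : pos Y k.+1 m.
  apply: (@pos_mono _ n m k.+1 m); [apply: gRSK_pos => //; lia | lia | lia].
rewrite /Gf.
have hc : (minn n m - k.+1 = (minn n m - k).-1)%N by lia.
have hc1 : ((minn n m - k.+1).+1 = minn n m - k)%N by lia.
rewrite hc1 hc C_Rmove //; [|lia|lia].
rewrite (big_ltn (m:=k.+1)); last by lia.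
rewrite hc1 !addrA; congr (_ + _ + _).
- apply: eq_big_nat => i /andP[i1 i2].
  rewrite /vv (_ : (i == 0%N) = false); last by lia.
  by rewrite (_ : ((minn n m - k)%N == 0%N) = false) //; lia.
- apply: eq_big_nat => i /andP[i1 i2].
  by rewrite Rmove_fr //; lia.
Qed.

Lemma gRSK_11 k n m (W : mx R) : (minn n m <= k <= n)%N ->
  gRSK k m W 1 1 = gRSK (minn n m) m W 1 1.
Proof.
elim: k => [|k IH] hk; first by have -> : minn n m = 0%N by lia.
case: (minn n m =P k.+1) => [->//|ne].
rewrite gRSKS Rmove11; last by lia.
by apply: IH; lia.
Qed.

Lemma sum_pt (F : nat -> R) a b c : (a <= c < b)%N ->
  \sum_(a <= j < b) (if j == c then F j else 0) = F c.
Proof.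
move=> /andP[ac cb].
rewrite (big_cat_nat ac (ltnW cb)) /=.
rewrite big1_seq; last by move=> j /andP[_]; rewrite mem_index_iota => h; case: eqP => //; lia.
rewrite (big_ltn cb) eqxx big1_seq ?add0r ?addr0 //.
by move=> j /andP[_]; rewrite mem_index_iota => h; case: eqP => //; lia.
Qed.

Lemma excl_sum (f : nat -> nat -> R) n m : 
  \sum_(1 <= i < n.+1) \sum_(1 <= j < m.+1 | (i + j != (minn n m).+1)%N) f i j
  = \sum_(1 <= i < n.+1) \sum_(1 <= j < m.+1) f i j
    - \sum_(1 <= i < (minn n m).+1) f i (minn n m - i).+1.
Proof.
have E : forall i, (1 <= i <= n)%N ->
  \sum_(1 <= j < m.+1 | (i + j != (minn n m).+1)%N) f i j
  = \sum_(1 <= j < m.+1) f i j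
    - (if (i <= minn n m)%N then f i (minn n m - i).+1 else 0).
  move=> i hi.
  rewrite [in RHS](bigID (fun j => (i + j != (minn n m).+1)%N)) /=.
  suff -> : \sum_(1 <= j < m.+1 | ~~ (i + j != (minn n m).+1)%N) f i j
    = (if (i <= minn n m)%N then f i (minn n m - i).+1 else 0) by rewrite addrK.
  rewrite big_mkcond /=.
  case: ifP => hp.
    rewrite -(sum_pt (fun j => f i j) 1 m.+1); last by lia.
    apply: eq_big_nat => j _.
    case: (j =P (minn n m - i).+1) => [->|ne].
      by rewrite negbK (_ : (i + (minn n m - i).+1 == (minn n m).+1)%N) //; lia.
    by rewrite negbK (_ : (i + j == (minn n m).+1)%N = false) //; lia.
  rewrite big_nat_cond big1 // => j /andP[/andP[j1 j2] _].
  by rewrite negbK (_ : (i + j == (minn n m).+1)%N = false) //; lia.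
rewrite (@eq_big_nat _ _ _ 1 n.+1 _ (fun i => \sum_(1 <= j < m.+1) f i j
    - (if (i <= minn n m)%N then f i (minn n m - i).+1 else 0)) E) sumrB.
congr (_ - _).
rewrite (big_cat_nat (n:=(minn n m).+1)) /=; [|lia|lia].
have Z0 : \sum_((minn n m).+1 <= i < n.+1)
   (if (i <= minn n m)%N then f i (minn n m - i).+1 else 0) = 0.
  rewrite big_nat_cond big1 // => i /andP[/andP[h1 h2] _]; case: ifP => //; lia.
rewrite Z0 addr0.
apply: eq_big_nat => i /andP[h1 h2]; case: ifP => //; lia.
Qed.

Lemma xz_U (T : mx R) n m : (0 < n)%N -> (0 < m)%N ->
  U T n m = \sum_(1 <= i < n.+1) \sum_(1 <= j < m.+1) (xz T i.-1 j + xz T i j.-1) / T i j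
            + 1 / T 1%N 1%N.
Proof.
move=> n0 m0.
rewrite /U.
have E : forall i j, (1 <= i)%N -> (1 <= j)%N -> ZF T i j =
  (xz T i.-1 j + xz T i j.-1) / T i j + (if (i == 1%N) && (j == 1%N) then 1 / T 1%N 1%N else 0).
  move=> i j hi hj; rewrite /ZF /vv /xz.
  case: i hi => [//|[|i]] _; case: j hj => [//|[|j]] _ /=; ring.
have E2 : \sum_(1 <= i < n.+1) \sum_(1 <= j < m.+1) ZF T i j =
  \sum_(1 <= i < n.+1) \sum_(1 <= j < m.+1) ((xz T i.-1 j + xz T i j.-1) / T i j
     + (if (i == 1%N) && (j == 1%N) then 1 / T 1%N 1%N else 0)).
  apply: eq_big_nat => i hi; apply: eq_big_nat => j hj; apply: E; lia.
rewrite E2.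
under eq_bigr => i _ do rewrite big_split.
rewrite big_split /=; congr (_ + _).
rewrite (big_ltn (m:=1)) //= (big_ltn (m:=1)) //=.
rewrite big_nat_cond big1 ?addr0; last first.
  by move=> j /andP[/andP[h1 h2] _]; rewrite (_ : (j == 1%N) = false) //; lia.
rewrite big_nat_cond big1 ?addr0 //.
move=> i /andP[/andP[h1 h2] _]; rewrite (_ : (i == 1%N) = false) //=.
  by rewrite big1.
lia.
Qed.


Local Open Scope complex_scope.

Lemma main_thm (n m : nat) (W : nat -> nat -> R) (s : R[i]) :
  (0 < n)%N -> (0 < m)%N ->
  (forall i j, (1 <= i <= n)%N -> (1 <= j <= m)%N -> (0 < W i j)%R) ->
  let p := minn n m in
  ((\sum_(1 <= i < p.+1) s / (W i (p - i).+1)%:C) +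
   \sum_(1 <= i < n.+1) \sum_(1 <= j < m.+1 | (i + j != p.+1)%N)
      (1 / W i j)%:C)%R
  = energy n m s (gRSK n m W).
Proof.
move=> n0 m0 Wp0 p.
have Wp : pos W n m by move=> i j hi hj; apply: Wp0; lia.
set T := gRSK n m W.
have p0 : (0 < p)%N by rewrite /p; lia.
have HU : U T n m = \sum_(1 <= i < n.+1) \sum_(1 <= l < m.+1) 1 / W i l.
  exact: gRSK_U Wp (leqnn n).
have HG := @gRSK_G (minn n m) n m W Wp (leqnn _).
have T11 : T 1%N 1%N = gRSK p m W 1%N 1%N by apply: gRSK_11; rewrite /p; lia.
have Gp : Gf p p (gRSK p m W) = 1 / gRSK p m W 1%N 1%N.
  set G := gRSK p m W. rewrite /Gf subnn [\sum_(p.+1 <= i < p.+1) _]big_geq // addr0 (big_ltn (m:=1)) // big_nat_cond big1 ?addr0 //. 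
  move=> i /andP[/andP[h1 h2] _]; rewrite /vv.
  case: (i =P 0%N) => [?|_]; first by exfalso; lia.
  case: (i =P 1%N) => [?|_]; first by exfalso; lia.
  by rewrite mul0r.


have G0 : Gf p 0 W = \sum_(1 <= i < p.+1) 1 / W i (p - i).+1.
  by rewrite /Gf big_geq // add0r.
rewrite -/p in HG.
have HA : 1 / T 1%N 1%N = \sum_(1 <= i < p.+1) 1 / W i (p - i).+1 by rewrite T11 -Gp HG G0.
have Hxz := xz_U T n m n0 m0.
rewrite /energy -/T.
have ES : \sum_(1 <= i < n.+1) \sum_(1 <= j < m.+1)
    ((xz T i.-1 j + xz T i j.-1) / T i j)%:C
  = (\sum_(1 <= i < n.+1) \sum_(1 <= j < m.+1) (xz T i.-1 j + xz T i j.-1) / T i j)%:C.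
  by rewrite rmorph_sum; apply: eq_bigr => i _; rewrite rmorph_sum.
have EW : \sum_(1 <= i < n.+1) \sum_(1 <= j < m.+1 | (i + j != p.+1)%N) (1 / W i j)%:C
  = (\sum_(1 <= i < n.+1) \sum_(1 <= j < m.+1 | (i + j != p.+1)%N) 1 / W i j)%:C.
  by rewrite rmorph_sum; apply: eq_bigr => i _; rewrite rmorph_sum.
have EL : \sum_(1 <= i < p.+1) s / (W i (p - i).+1)%:C
  = s * (\sum_(1 <= i < p.+1) 1 / W i (p - i).+1)%:C.
  rewrite rmorph_sum mulr_sumr; apply: eq_bigr => i _.
  by rewrite fmorph_div rmorph1 mul1r.
have ER : s / (T 1%N 1%N)%:C = s * (1 / T 1%N 1%N)%:C.
  by rewrite fmorph_div rmorph1 mul1r.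
rewrite ES EW EL ER HA excl_sum -/p.
congr (_ + _%:C).
rewrite -HU Hxz -HA.
by rewrite addrK.
Qed.

End Proof.

Theorem theorem3p2 (R : realType) (n m : nat) (W : nat -> nat -> R) (s : R[i]) :
  (0 < n)%N -> (0 < m)%N ->
  (forall i j, (1 <= i <= n)%N -> (1 <= j <= m)%N -> (0 < W i j)%R) ->
  let p := minn n m in
  ((\sum_(1 <= i < p.+1) s / (W i (p - i).+1)%:C) +
   \sum_(1 <= i < n.+1) \sum_(1 <= j < m.+1 | (i + j != p.+1)%N)
      (1 / W i j)%:C)%R
  = energy n m s (gRSK n m W).
Proof. exact: (@main_thm R n m W s). Qed.
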